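(* Let $n\ge1$ and let $\mathcal{G}_n\subset GL_n(\mathbb{Z})$ be the group generated by the linear maps $\sigma_1,\dotsc,\sigma_n$ of $\mathbb{Z}^n$ which, in coordinates $x=(x_1,\dotsc,x_n)$, are \[ \sigma_1:\ x_{2i}\mapsto x_{2i}+x_1,\quad x_{2i-1}\mapsto x_{2i-1}\quad(\text{all admissible } i), \] \[ \sigma_i\ (2\le i\le n):\ x_{i-1}\mapsto x_{i-2}+x_{i-1}-x_i,\quad x_j\mapsto x_j\ (j\ne i-1), \] with the convention $x_0=0$. Let \[ J(x,y)=\sum_{i=1}^{n-1}\left(x_iy_{i+1}-x_{i+1}y_i\right). \] If $n$ is even, then $J$ is non-degenerate and $J(gx,gy)=J(x,y)$ for all $g\in\mathcal{G}_n$ and all $x,y$. If $n$ is odd, then $J(\sigma_ix,\sigma_iy)=J(x,y)$ for all $i\ge2$ and all $x,y$, and the kernel of $J$ (the set of $x$ with $J(x,y)=0$ for all $y$, as a form on $\mathbb{Q}^n$) is one-dimensional.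
   Context: These coordinates arise as follows: if $k=(k_1,\dotsc,k_n)$ and $x_i=k_i-k_{i-1}+k_{i-2}-\dotsb+(-1)^{i+1}k_1$ (equivalently $k_i=x_{i-1}+x_i$, $x_0=0$), then the maps above are the maps $\sigma_1: k_1\mapsto k_1,\ k_j\mapsto k_j+k_1\ (j>1)$ and, for $i\ge2$, $\sigma_i: k_{i-1}\mapsto 2k_{i-1}-k_i,\ k_i\mapsto k_{i-1},\ k_j\mapsto k_j\ (j\ne i-1,i)$. *)

(* Defs.v *)
From HB Require Import structures.
From mathcomp Require Import all_boot all_order all_algebra.
Set Implicit Arguments. Unset Strict Implicit. Unset Printing Implicit Defensive.
Import GRing.Theory Num.Theory.
Local Open Scope ring_scope.

(* Coordinates are 1-based in the paper: row/column index r : 'I_n stands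
   for the coordinate x_(r+1).  Column vectors 'cV_n represent points of Z^n
   (or Q^n), and a matrix M acts by x |-> M *m x. *)

(* The generator sigma_i of G_n, as an integer matrix (row p gives the new
   value of x_p in terms of the old coordinates x_q).  For i >= 2:
   x_(i-1) |-> x_(i-2) + x_(i-1) - x_i (with x_0 = 0, i.e. no column 0),
   other coordinates fixed. *)
Definition sigma (n i : nat) : 'M[int]_n :=
  \matrix_(r < n, c < n)
    let p := r.+1 in let q := c.+1 in
    if i == 1%N then
      (if ~~ odd p then (p == q)%:R + (q == 1%N)%:R else (p == q)%:R)
    else if p == i.-1 then (q == i.-2)%:R + (q == i.-1)%:R - (q == i)%:R
    else (p == q)%:R.

Inductive in_Gn (n : nat) : 'M[int]_n -> Prop :=
| Gn1 : in_Gn 1%:M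
| GnM i g : (1 <= i <= n)%N -> in_Gn g -> in_Gn (sigma n i *m g)
| GnV i g : (1 <= i <= n)%N -> in_Gn g -> in_Gn (invmx (sigma n i) *m g).

Definition JForm (R : nzRingType) (n : nat) (x y : 'cV[R]_n) : R :=
  \sum_(i < n) \sum_(j < n | j == i.+1 :> nat) (x i 0 * y j 0 - x j 0 * y i 0).

(* Main.v *)
Require Import Defs.
From HB Require Import structures.
From mathcomp Require Import all_boot all_order all_algebra.
From mathcomp Require Import zify ring.
Import GRing.Theory Num.Theory.
Local Open Scope ring_scope.



Definition Om (R : nzRingType) n : 'M[R]_n :=
  \matrix_(i < n, j < n) (((j:nat) == i.+1)%:R - ((i:nat) == j.+1)%:R).

Lemma OmT (R : comNzRingType) n : (Om R n)^T = - Om R n.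
Proof. by apply/matrixP=> i j; rewrite !mxE opprB. Qed.

Lemma JFormE (R : comNzRingType) n (x y : 'cV[R]_n) :
  JForm x y = (x^T *m Om R n *m y) 0 0.
Proof.
rewrite /JForm mxE.
under [RHS]eq_bigr => j _ do rewrite mxE big_distrl /=.
rewrite exchange_big /=.
under [RHS]eq_bigr => i _ do under eq_bigr => j _ do rewrite !mxE mulrBr mulrBl.
rewrite -[RHS]/(\sum_i \sum_j _).
under [RHS]eq_bigr => i _ do rewrite sumrB.
rewrite sumrB.
under eq_bigr => i _ do rewrite sumrB.
rewrite sumrB; congr (_ - _).
  apply: eq_bigr => i _; rewrite big_mkcond; apply: eq_bigr => j _.
  case: eqP => _; rewrite ?mulr1 ?mulr0 ?mul1r ?mul0r //=.
rewrite [RHS]exchange_big; apply: eq_bigr => i _; rewrite big_mkcond; apply: eq_bigr => j _.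
case: eqP => _; rewrite ?mulr1 ?mulr0 ?mul1r ?mul0r //=.
Qed.



Lemma rank1_inv (R : comNzRingType) n (a b : 'cV[R]_n) :
  Om R n *m a = b -> a^T *m Om R n *m a = 0 ->
  (1%:M + a *m b^T)^T *m Om R n *m (1%:M + a *m b^T) = Om R n.
Proof.
move=> hb h0.
have h1 : a^T *m Om R n = - b^T by rewrite -hb trmx_mul OmT mulmxN opprK.
rewrite (raddfD (@trmx R n n)) /= trmx1 trmx_mul trmxK mulmxDl mul1mx mulmxDr mulmx1 -!mulmxA h1.
have h2 : b^T *m a = 0 by rewrite -[b^T]opprK -h1 mulNmx h0 oppr0.
rewrite mulmxDl mulmxA hb mulmxN mulNmx -mulmxA (mulmxA b^T) h2 mul0mx mulmx0 oppr0 addr0.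
by rewrite subrK.
Qed.

Lemma rank1_unit (R : comUnitRingType) n (a b : 'cV[R]_n) :
  b^T *m a = 0 -> (1%:M + a *m b^T) \in unitmx.
Proof.
move=> h0; apply: (proj1 (@mulmx1_unit R n _ (1%:M - a *m b^T) _)).
rewrite mulmxBr mulmx1 mulmxDl mul1mx -(mulmxA a) (mulmxA b^T) h0 mul0mx mulmx0 addr0.
by rewrite addrK.
Qed.

Definition Pres {R : comNzRingType} {n} (g : 'M[R]_n) := g^T *m Om R n *m g = Om R n.

Lemma Pres_mul (R : comNzRingType) n (g h : 'M[R]_n) : Pres g -> Pres h -> Pres (g *m h).
Proof.
rewrite /Pres => hg hh; rewrite trmx_mul !mulmxA -(mulmxA h^T) -(mulmxA h^T) hg.
by []. Qed.

Lemma Pres_inv (R : comUnitRingType) n (g : 'M[R]_n) : g \in unitmx -> Pres g -> Pres (invmx g).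
Proof.
rewrite /Pres => hu hg; rewrite -{1}hg !mulmxA -trmx_mul mulmxV // trmx1 mul1mx.
by rewrite -mulmxA mulmxV // mulmx1.
Qed.

Lemma Pres_J (R : comNzRingType) n (g : 'M[R]_n) x y : Pres g -> JForm (g *m x) (g *m y) = JForm x y.
Proof. by rewrite /Pres !JFormE trmx_mul => hg; rewrite !mulmxA -(mulmxA x^T) -(mulmxA x^T) hg. Qed.



Lemma sum_delta (R : nzRingType) n (F : 'I_n -> R) k (hk : (k < n)%N) :
  \sum_(j < n) ((j:nat) == k)%:R * F j = F (Ordinal hk).
Proof.
rewrite (bigD1 (Ordinal hk)) //= eqxx mul1r big1 ?addr0 // => j hj.
suff -> : ((j:nat) == k) = false by rewrite mul0r.
by apply/negbTE; apply: contra hj => /eqP e; apply/eqP/val_inj.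
Qed.

Lemma sum_delta_r (R : nzRingType) n (F : 'I_n -> R) k (hk : (k < n)%N) :
  \sum_(j < n) F j * ((j:nat) == k)%:R = F (Ordinal hk).
Proof.
rewrite (bigD1 (Ordinal hk)) //= eqxx mulr1 big1 ?addr0 // => j hj.
suff -> : ((j:nat) == k) = false by rewrite mulr0.
by apply/negbTE; apply: contra hj => /eqP e; apply/eqP/val_inj.
Qed.

Lemma sum_delta0 (R : nzRingType) n (F : 'I_n -> R) k (hk : (n <= k)%N) :
  \sum_(j < n) ((j:nat) == k)%:R * F j = 0.
Proof.
rewrite big1 // => j _; suff -> : ((j:nat) == k) = false by rewrite mul0r.
apply/negbTE; have := ltn_ord j; lia.
Qed.

Definition ek (R : nzRingType) n k : 'cV[R]_n := \col_(a < n) ((a:nat) == k)%:R.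
Definition wv (R : nzRingType) n : 'cV[R]_n := \col_(a < n) (odd a)%:R.
Definition fv (R : nzRingType) n : 'cV[R]_n := \col_(a < n) ((a:nat) == 0%N)%:R.

Lemma sigma_ge2 n k (hk : (k.+2 <= n)%N) :
  sigma n k.+2 = 1%:M + ek int n k *m (Om int n *m ek int n k)^T.
Proof.
have hk' : (k < n)%N by lia.
apply/matrixP => a c; rewrite !mxE big_ord1 !mxE.
rewrite /ek; under eq_bigr => j _ do rewrite !mxE.
rewrite (@sum_delta_r _ _ _ _ hk') /=.
rewrite -val_eqE /= !eqSS.
by repeat (case: eqP => ?); try lia; simpl; ring.
Qed.



Lemma Om_diag (R : nzRingType) n (k : 'I_n) : Om R n k k = 0.
Proof. rewrite !mxE; have -> : ((k:nat) == k.+1) = false by lia. by rewrite subrr. Qed.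

Lemma ek_quad (R : comNzRingType) n k (hk : (k < n)%N) :
  (ek R n k)^T *m Om R n *m ek R n k = 0.
Proof.
apply/matrixP => i j; rewrite /ek !ord1 !mxE.
under eq_bigr => l _ do rewrite !mxE.
rewrite (@sum_delta_r _ _ _ _ hk) ?mxE.
under eq_bigr => l _ do rewrite !mxE.
by rewrite (@sum_delta _ _ _ _ hk) subrr.
Qed.

Lemma ek_orth (R : comNzRingType) n k (hk : (k < n)%N) :
  (Om R n *m ek R n k)^T *m ek R n k = 0.
Proof.
apply/matrixP => i j; rewrite /ek !ord1 !mxE.
under eq_bigr => l _ do rewrite !mxE.
rewrite (@sum_delta_r _ _ _ _ hk).
under eq_bigr => l _ do rewrite !mxE.
by rewrite (@sum_delta_r _ _ _ _ hk) ?mxE subrr.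
Qed.

Lemma sigma_1 n : sigma n 1 = 1%:M + wv int n *m (fv int n)^T.
Proof.
apply/matrixP => a c; rewrite !mxE big_ord1 !mxE /= -val_eqE /= eqSS.
rewrite /wv /fv ?mxE negbK; case: (odd a); simpl; repeat (case: eqP => ?); simpl. all: try lia.
Qed.

Lemma fw_orth (R : comNzRingType) n : (fv R n)^T *m wv R n = 0.
Proof.
apply/matrixP => i j; rewrite /fv /wv !ord1 !mxE big1 // => l _; rewrite !mxE.
have [e|ne] := eqVneq (l:nat) 0%N; first by rewrite e /= ?mulr0 ?mul0r.
by rewrite mul0r.
Qed.

Lemma Om_wv (R : comNzRingType) n : ~~ odd n -> Om R n *m wv R n = fv R n.
Proof.
move=> hn; apply/matrixP => -[a ha] c; rewrite !ord1 !mxE /=.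
under eq_bigr => l _ do rewrite !mxE mulrBl (eq_sym a).
rewrite sumrB.
case: a ha => [|a] ha.
  have h1 : (1 < n)%N by lia.
  rewrite (@sum_delta _ _ _ _ h1) /= big1 ?subr0 // => l _; by rewrite mul0r.
under [X in _ - X = _]eq_bigr => l _ do rewrite eqSS.
have h2 : (a < n)%N by lia.
rewrite (@sum_delta _ _ _ _ h2) /=.
case: (ltnP a.+2 n) => h1.
  by rewrite (@sum_delta _ _ _ _ h1) /= negbK subrr.
rewrite (@sum_delta0 _ _ _ _ h1).
have -> : odd a = false by lia.
by rewrite subrr.
Qed.

Lemma wv_quad (R : comNzRingType) n : ~~ odd n -> (wv R n)^T *m Om R n *m wv R n = 0.
Proof.
move=> hn; rewrite -mulmxA Om_wv //.
apply/matrixP => i j; rewrite /fv /wv !ord1 !mxE big1 // => l _; rewrite !mxE.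
by case: eqP => [->|]; rewrite ?mul0r ?mulr0.
Qed.



Lemma Om_x (R : comNzRingType) m (x : 'cV[R]_m.+1) (b : 'I_m.+1) :
  (Om R m.+1 *m x) b 0 =
  (if (b.+1 <= m)%N then x (inord b.+1) 0 else 0) -
  (if (b:nat) is b'.+1 then x (inord b') 0 else 0).
Proof.
case: b => b hb; rewrite !mxE /=.
under eq_bigr => l _ do rewrite !mxE mulrBl (eq_sym b).
rewrite sumrB; congr (_ - _).
  case: (ltnP b.+1 m.+1) => h1.
    rewrite (@sum_delta _ _ _ _ h1); have -> : (b.+1 <= m)%N = true by lia. congr (x _ 0); apply/val_inj; rewrite /= inordK //.
  rewrite (@sum_delta0 _ _ _ _ h1); have -> : (b.+1 <= m)%N = false by lia. by [].
case: b hb => [|b] hb.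
  by rewrite big1 // => l _; rewrite mul0r.
under eq_bigr => l _ do rewrite eqSS.
have h2 : (b < m.+1)%N by lia.
rewrite (@sum_delta _ _ _ _ h2); congr (x _ 0); apply/val_inj; rewrite /= inordK //.
Qed.

Lemma JForm_anti (R : comNzRingType) n (x y : 'cV[R]_n) : JForm x y = - JForm y x.
Proof.
rewrite !JFormE.
have -> : (x^T *m Om R n *m y) 0 0 = ((x^T *m Om R n *m y)^T) 0 0 by rewrite [RHS]mxE.
by rewrite !trmx_mul trmxK OmT mulNmx mulmxN mulmxA mxE.
Qed.

Lemma ker_Om (R : comNzRingType) m (x : 'cV[R]_m.+1) :
  (forall y, JForm x y = 0) -> forall b : 'I_m.+1, (Om R m.+1 *m x) b 0 = 0.
Proof.
move=> h b; have := h (ek R m.+1 b); rewrite JForm_anti JFormE -mulmxA mxE.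
move/eqP; rewrite oppr_eq0 => /eqP.
rewrite (eq_bigr (fun j : 'I_m.+1 => ((j:nat) == b)%:R * (Om R m.+1 *m x) j 0)); last by move=> j _; rewrite !mxE.
rewrite (@sum_delta _ _ _ _ (ltn_ord b)).
by have -> : Ordinal (ltn_ord b) = b by apply/val_inj.
Qed.




Lemma F1 (R : comNzRingType) (m : nat) (x : 'cV[R]_m.+1) (K : forall b : 'I_m.+1, (Om R m.+1 *m x) b 0 = 0) : (1 <= m)%N -> x (inord 1) 0 = 0.
Proof. move=> h; have := K ord0; rewrite Om_x /= h subr0 //. Qed.

Lemma F2 (R : comNzRingType) (m : nat) (x : 'cV[R]_m.+1) (K : forall b : 'I_m.+1, (Om R m.+1 *m x) b 0 = 0) c : (c.+2 <= m)%N -> x (inord c.+2) 0 = x (inord c) 0.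
Proof.
move=> h; have := K (inord c.+1); rewrite Om_x inordK; last lia.
by rewrite h => /eqP; rewrite subr_eq0 => /eqP.
Qed.

Lemma F3 (R : comNzRingType) (m : nat) (x : 'cV[R]_m.+1) (K : forall b : 'I_m.+1, (Om R m.+1 *m x) b 0 = 0) : (1 <= m)%N -> x (inord m.-1) 0 = 0.
Proof.
move=> h; have := K ord_max; rewrite Om_x /= ltnn sub0r => /eqP; rewrite oppr_eq0 => /eqP.
have H : forall k, (0 < k)%N -> (match k with 0%N => 0 | b.+1 => x (inord b) 0 end) = x (inord k.-1) 0 by case.
by rewrite H.
Qed.

Lemma Xodd (R : comNzRingType) (m : nat) (x : 'cV[R]_m.+1) (K : forall b : 'I_m.+1, (Om R m.+1 *m x) b 0 = 0) k : (k.*2.+1 <= m)%N -> x (inord k.*2.+1) 0 = 0.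
Proof.
elim: k => [|k IH] h; first exact: (@F1 R m x K).
rewrite doubleS (@F2 R m x K); last by []. apply: IH; lia.
Qed.

Lemma Xeven (R : comNzRingType) (m : nat) (x : 'cV[R]_m.+1) (K : forall b : 'I_m.+1, (Om R m.+1 *m x) b 0 = 0) k : (k.*2 <= m)%N -> x (inord k.*2) 0 = x (inord 0) 0.
Proof.
elim: k => [|k IH] h; first by [].
rewrite doubleS (@F2 R m x K) // IH //; lia.
Qed.

Lemma Xeven_top (R : comNzRingType) (m : nat) (x : 'cV[R]_m.+1) (K : forall b : 'I_m.+1, (Om R m.+1 *m x) b 0 = 0) k : odd m -> (k.*2 < m)%N -> x (inord (m.-1 - k.*2)) 0 = 0.
Proof.
move=> hm; elim: k => [|k IH] h; first by rewrite subn0; apply: (@F3 R m x K); lia.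
have -> : (m.-1 - k.+1.*2 = (m.-1 - k.*2 - 2))%N by lia.
rewrite -(@F2 R m x K); last lia.
have -> : ((m.-1 - k.*2 - 2).+2 = m.-1 - k.*2)%N by lia.
apply: IH; lia.
Qed.




Lemma ker_even m (x : 'cV[rat]_m.+1) : ~~ odd m.+1 -> (forall y, JForm x y = 0) -> x = 0.
Proof.
move=> hn h; have K := @ker_Om _ _ x h.
apply/matrixP => a c; rewrite ord1 [RHS]mxE -[a]inord_val.
have ha := ltn_ord a.
case: (boolP (odd a)) => ho.
  have e : (a:nat) = (a./2).*2.+1 by rewrite -{1}(odd_double_half a) ho.
  rewrite e (@Xodd _ _ _ K) //; rewrite -e; lia.
have ho2 : odd (m.-1 - a) = false by lia.
have e2 : ((m.-1 - a)./2).*2 = (m.-1 - a)%N by rewrite -{2}(odd_double_half (m.-1 - a)) ho2.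
have e : (a:nat) = (m.-1 - ((m.-1 - a)./2).*2)%N by lia.
rewrite e (@Xeven_top _ _ _ K) //; lia.
Qed.

Definition vv m : 'cV[rat]_m.+1 := \col_(a < m.+1) (~~ odd a)%:R.

Lemma Om_v m : odd m.+1 -> Om rat m.+1 *m vv m = 0.
Proof.
move=> hn; apply/matrixP => b c; rewrite ord1 Om_x [RHS]mxE /vv.
have hb := ltn_ord b.
case: b hb => [[|b]] hb /=.
  case: (ltnP 0 m) => h; rewrite ?mxE ?inordK //= ?subr0 //.
case: ifP => h.
  rewrite !mxE !inordK /=; try lia.
  by rewrite negbK subrr.
rewrite !mxE !inordK /=; try lia.
have -> : odd b = true by lia.
by rewrite subrr.
Qed.

Lemma ker_odd m (x : 'cV[rat]_m.+1) : odd m.+1 ->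
  (forall y, JForm x y = 0) <-> exists c : rat, x = c *: vv m.
Proof.
move=> hn; split.
  move=> h; have K := @ker_Om _ _ x h; exists (x (inord 0) 0).
  apply/matrixP => a c; rewrite ord1 !mxE -[a in LHS]inord_val.
  have ha := ltn_ord a.
  case: (boolP (odd a)) => ho /=.
    have e : (a:nat) = (a./2).*2.+1 by rewrite -{1}(odd_double_half a) ho.
    rewrite e (@Xodd _ _ _ K) ?mulr0 //; rewrite -e; lia.
  have e : (a:nat) = (a./2).*2 by rewrite -{1}(odd_double_half a) (negbTE ho).
  rewrite e (@Xeven _ _ _ K) ?mulr1 //; rewrite -e; lia.
move=> [c ->] y.
rewrite JForm_anti JFormE -mulmxA -scalemxAr Om_v // scaler0 mulmx0 mxE.
by rewrite oppr0.
Qed.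

Lemma vv_neq0 m : vv m != 0.
Proof.
apply/negP => /eqP h; have := congr1 (fun M : 'cV[rat]_m.+1 => M ord0 ord0) h.
by rewrite /vv !mxE /= => /eqP; rewrite oner_eq0.
Qed.

Lemma Pres_sigma n i : (1 <= i <= n)%N -> (i == 1%N -> ~~ odd n) ->
  Pres (sigma n i) /\ sigma n i \in unitmx.
Proof.
case: i => [|[|k]] //= hi hev.
  have hn := hev isT.
  rewrite sigma_1; split; first exact: (@rank1_inv _ _ _ _ (@Om_wv _ _ hn) (@wv_quad _ _ hn)).
  exact: (@rank1_unit _ _ _ _ (@fw_orth _ _)).
have hk : (k < n)%N by lia.
rewrite sigma_ge2 //; split; first exact: (@rank1_inv _ _ _ _ erefl (@ek_quad _ _ _ hk)).
exact: (@rank1_unit _ _ _ _ (@ek_orth _ _ _ hk)).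
Qed.



Theorem mainTheorem3 (n : nat) (hn : (1 <= n)%N) :
  (~~ odd n ->
     (forall x : 'cV[rat]_n, (forall y : 'cV[rat]_n, JForm x y = 0) -> x = 0) /\
     (forall g : 'M[int]_n, in_Gn g ->
        forall x y : 'cV[int]_n, JForm (g *m x) (g *m y) = JForm x y)) /\
  (odd n ->
     (forall i : nat, (2 <= i <= n)%N ->
        forall x y : 'cV[int]_n,
          JForm (sigma n i *m x) (sigma n i *m y) = JForm x y) /\
     (exists v : 'cV[rat]_n, v != 0 /\
        forall x : 'cV[rat]_n,
          (forall y : 'cV[rat]_n, JForm x y = 0) <-> exists c : rat, x = c *: v)).
Proof.
case: n hn => [|m] // _; split.
  move=> hev; split; first by move=> x; exact: ker_even.
  move=> g hg x y; apply: Pres_J.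
  elim: hg => [|i g' hi _ IH|i g' hi _ IH].
  - by rewrite /Pres trmx1 mul1mx mulmx1.
  - have [hp _] := @Pres_sigma m.+1 i hi (fun _ => hev).
    exact: (@Pres_mul _ _ _ _ hp IH).
  - have [hp hu] := @Pres_sigma m.+1 i hi (fun _ => hev).
    exact: (@Pres_mul _ _ _ _ (@Pres_inv _ _ _ hu hp) IH).
move=> hodd; split.
  move=> i hi x y; apply: Pres_J.
  have hi' : (1 <= i <= m.+1)%N by lia.
  have [hp _] := @Pres_sigma m.+1 i hi' (fun e => ltac:(move: e hi => /eqP ->; done)).
  exact: hp.
exists (vv m); split; first exact: vv_neq0.
by move=> x; exact: ker_odd.
Qed.
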